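(* Fix integers $n\ge m\ge 0$, $N_T\ge1$, and a nonzero homogeneous polynomial $Q$ of degree $n-m$ in $a^\dagger_1,\dots,a^\dagger_{N_T}$ (a pure $(n-m)$-photon, $N_T$-mode target state). Let $N=\max\{n,N_T+m\}$ and $M=m$, and consider the optimal configuration: input $\prod_{i=1}^n a^\dagger_i|0\rangle$ on $N$ modes and heralding pattern $(1,\dots,1)$ on the last $m$ modes. Equating the coefficients of all monomials in $a^\dagger_1,\dots,a^\dagger_{N-M}$ in the identity $\gamma G=Q$ gives a finite system of polynomial equations $f_1=\dots=f_s=0$ in the unknowns $\gamma$ and $A_{i,j}$ ($1\le i,j\le N$). If this system admits a Nullstellensatz certificate, i.e. polynomials $\beta_1,\dots,\beta_s$ in these unknowns with complex coefficients such that $1=\sum_{i=1}^s\beta_i f_i$, then $Q$ cannot be generated, for any number of modes, from any multi-mode Fock input state containing $n$ photons heralded by any photon-number pattern containing $m$ photons.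
   Context: Heralded linear-optical state generation model. States with a fixed photon number are homogeneous polynomials in commuting variables $a^\dagger_1,\dots,a^\dagger_N$ applied to the vacuum. Given $N$ modes, an arbitrary complex $N\times N$ matrix $A$ (not required to be unitary), and a Fock input $\prod_{i=1}^N\frac{1}{\sqrt{n_i!}}(a^\dagger_{i,\mathrm{in}})^{n_i}|0\rangle$, the output is $F|0\rangle$ with $F=\prod_{i=1}^N\frac{1}{\sqrt{n_i!}}\big(\sum_{j=1}^N A_{i,j}a^\dagger_j\big)^{n_i}$. Heralding the last $M$ modes on the pattern $(m_1,\dots,m_M)$ (entries $\ge0$, zero meaning vacuum), $m=\sum_j m_j$, gives $G=\frac{1}{\prod_j m_j!}\,\frac{\partial^{m}F}{\partial(a^\dagger_{N-M+1})^{m_1}\cdots\partial(a^\dagger_N)^{m_M}}\Big|_{a^\dagger_{N-M+1}=\cdots=a^\dagger_N=0}$, a polynomial in $a^\dagger_1,\dots,a^\dagger_{N-M}$. A target $Q$ on $N_T\le N-M$ modes is viewed as a polynomial in $a^\dagger_1,\dots,a^\dagger_{N-M}$ (remaining target-side modes in vacuum). $Q$ can be generated from a given input and heralding pattern if there exist a complex $N\times N$ matrix $A$ and $\gamma\in\mathbb{C}$ with $\gamma G=Q$. *)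

(* Defs.v *)
From HB Require Import structures.
From mathcomp Require Import all_boot all_algebra.
From mathcomp Require Import reals.
From mathcomp Require Import mpoly complex.

Set Implicit Arguments.
Unset Strict Implicit.
Unset Printing Implicit Defensive.

Import GRing.Theory Num.Theory.
Local Open Scope ring_scope.

(* Modes are indexed by 'I_(K + M): the first K modes are kept, the last M
   modes (indices rshift K j, j : 'I_M) are heralded.  N = K + M.          *)

(* F = prod_i c_i (sum_j A_{i,j} a^dag_j)^{n_i}, with normalisation c_i,
   over an arbitrary commutative ring (so that it can be used both with
   numerical entries and with indeterminate entries). *)
Definition Fpoly (R : comNzRingType) (N : nat) (A : 'M[R]_N)
    (nin : 'I_N -> nat) (c : 'I_N -> R) : {mpoly R[N]} :=
  \prod_(i < N) (c i *: (\sum_(j < N) A i j *: 'X_j) ^+ nin i).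

Definition herald_mnm (K M : nat) (mpat : 'I_M -> nat) : 'X_{1..K + M} :=
  [multinom (match split i with inl _ => 0%N | inr j => mpat j end)
   | i < K + M].

Definition herald_subst (R : comNzRingType) (K M : nat)
    : (K + M).-tuple {mpoly R[K]} :=
  [tuple (match split i with inl k => 'X_k | inr _ => 0 end) | i < K + M].

Definition Gpoly (R : comNzRingType) (K M : nat) (A : 'M[R]_(K + M))
    (nin : 'I_(K + M) -> nat) (c : 'I_(K + M) -> R)
    (mpat : 'I_M -> nat) (d : R) : {mpoly R[K]} :=
  d *: ((Fpoly A nin c)^`M[herald_mnm K mpat] \mPo herald_subst R K M).

Definition embed_target (R : comNzRingType) (NT K : nat)
    (Q : {mpoly R[NT]}) : {mpoly R[K]} :=
  Q \mPo [tuple (match @insub nat (fun k => k < K)%N _ (val i) with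
          | Some k => 'X_k | None => 0 end) | i < NT].

Section Complex.
Variable (R : realType).
Local Notation C := (R[i]).

(* Fock normalisation 1/sqrt(n_i!) and heralding normalisation 1/prod m_j! *)
Definition in_const (N : nat) (nin : 'I_N -> nat) (i : 'I_N) : C :=
  (sqrtC ((nin i)`!)%:R)^-1.
Definition herald_const (M : nat) (mpat : 'I_M -> nat) : C :=
  ((\prod_(j < M) (mpat j)`!)%:R)^-1.

Definition Gheralded (K M : nat) (A : 'M[C]_(K + M))
    (nin : 'I_(K + M) -> nat) (mpat : 'I_M -> nat) : {mpoly C[K]} :=
  Gpoly A nin (in_const nin) mpat (herald_const mpat).

Definition generable (NT K M : nat) (nin : 'I_(K + M) -> nat)
    (mpat : 'I_M -> nat) (Q : {mpoly C[NT]}) : Prop :=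
  exists (A : 'M[C]_(K + M)) (gamma : C),
    gamma *: Gheralded A nin mpat = embed_target K Q.

(* The polynomial system: unknowns gamma (variable ord0) and A_{i,j}
   (variable lift ord0 (mxvec_index i j)), i.e. 1 + N*N unknowns. *)
Definition unknowns (N : nat) := {mpoly C[(N * N).+1]}.

Definition gamma_var (N : nat) : unknowns N := 'X_ord0.
Definition A_var (N : nat) : 'M[unknowns N]_N :=
  \matrix_(i, j) 'X_(lift ord0 (mxvec_index i j)).

(* gamma * G - Q as a polynomial in a^dag_1..a^dag_K whose coefficients are
   polynomials in the unknowns *)
Definition system_poly (NT K M : nat) (nin : 'I_(K + M) -> nat)
    (mpat : 'I_M -> nat) (Q : {mpoly C[NT]}) : {mpoly (unknowns (K + M))[K]} :=
  gamma_var (K + M) *: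
    Gpoly (A_var (K + M)) nin (fun i => (in_const nin i)%:MP)
          mpat ((herald_const mpat)%:MP)
  - embed_target K (map_mpoly (fun c : C => mpolyC ((K + M) * (K + M)).+1 c) Q).

(* the equations f_mu = coefficient of the monomial mu in gamma G - Q;
   a Nullstellensatz certificate: 1 = sum_mu beta_mu f_mu (finite sum) *)
Definition has_Nullstellensatz_certificate (NT K M : nat)
    (nin : 'I_(K + M) -> nat) (mpat : 'I_M -> nat) (Q : {mpoly C[NT]}) : Prop :=
  exists (s : seq 'X_{1..K}) (beta : 'X_{1..K} -> unknowns (K + M)),
    1 = \sum_(mu <- s) beta mu * (@system_poly NT K M nin mpat Q)@_mu.

End Complex.

(* optimal configuration: N = max(n, NT + m), M = m, K = N - m;
   input: one photon in each of the first n modes; heralding pattern (1,...,1) *)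
Definition optK (n m NT : nat) : nat := (maxn n (NT + m) - m)%N.
Definition opt_input (n m NT : nat) : 'I_(optK n m NT + m) -> nat :=
  fun i => (i < n)%N : nat.
Definition opt_pattern (m : nat) : 'I_m -> nat := fun _ => 1%N.

(* Main.v *)
Require Import Defs.
From HB Require Import structures.
From mathcomp Require Import all_boot all_algebra.
From mathcomp Require Import reals.
From mathcomp Require Import mpoly complex.
From mathcomp Require Import zify.
Import GRing.Theory Num.Theory.
Local Open Scope ring_scope.
Set Implicit Arguments.
Unset Strict Implicit.
Unset Printing Implicit Defensive.

Section Gen.
Variable R : comNzRingType.

Lemma mpoly_ind2 (a : nat) (P : {mpoly R[a]} -> Prop) :
  (forall c, P c%:MP) -> (forall i, P 'X_i) ->
  (forall p q, P p -> P q -> P (p + q)) ->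
  (forall p q, P p -> P q -> P (p * q)) -> forall p, P p.
Proof.
move=> HC HX HD HM p; rewrite [p]mpolyE.
have P0 : P 0 by rewrite -mpolyC0.
have P1 : P 1 by rewrite -mpolyC1.
apply: (big_ind P) => // m _.
rewrite -mul_mpolyC; apply: (HM) => //.
rewrite mpolyXE_id.
apply: (big_ind P) => // i _.
move: (m i) => k; elim: k => [|k IH]; first by rewrite expr0.
by rewrite exprS; apply: (HM).
Qed.

Lemma comp_mpolyA (a b c : nat) (p : {mpoly R[a]}) (lq : a.-tuple {mpoly R[b]})
  (lr : b.-tuple {mpoly R[c]}) :
  (p \mPo lq) \mPo lr = p \mPo [tuple (tnth lq i \mPo lr) | i < a].
Proof.
elim/mpoly_ind2: p.
- by move=> c0; rewrite !comp_mpolyC.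
- by move=> i; rewrite !comp_mpolyXU -!tnth_nth tnth_mktuple.
- by move=> p q Hp Hq; rewrite !raddfD /= Hp Hq.
- by move=> p q Hp Hq; rewrite !rmorphM /= Hp Hq.
Qed.

Lemma mderiv_Xi (a : nat) (i j : 'I_a) :
  ('X_i : {mpoly R[a]})^`M(j) = (i == j)%:R.
Proof.
rewrite mderivX mnm1E; case: eqP => [->|_]; last by rewrite scale0r.
have -> : (U_(j) - U_(j) = 0)%MM by apply/mnmP => k; rewrite mnmBE subnn mnm0E.
by rewrite scale1r mpolyX0.
Qed.


Lemma mderiv_chain (a b : nat) (p : {mpoly R[a]}) (lq : a.-tuple {mpoly R[b]})
   (y : 'I_b) :
  (p \mPo lq)^`M(y) = \sum_(j < a) (p^`M(j) \mPo lq) * (tnth lq j)^`M(y).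
Proof.
elim/mpoly_ind2: p.
- move=> c0; rewrite comp_mpolyC mderivC big1 // => j _.
  by rewrite mderivC comp_mpoly0 mul0r.
- move=> i; rewrite comp_mpolyXU -tnth_nth (bigD1 i) //= big1.
    by rewrite mderiv_Xi eqxx comp_mpoly1 mul1r addr0.
  by move=> j /negbTE ji; rewrite mderiv_Xi eq_sym ji comp_mpoly0 mul0r.
- move=> p q Hp Hq; rewrite !raddfD /= Hp Hq -big_split /=.
  by apply: eq_bigr => j _; rewrite !raddfD /= mulrDl.
- move=> p q Hp Hq; rewrite !rmorphM /= mderivM Hp Hq.
  rewrite big_distrl big_distrr /= -big_split /=; apply: eq_bigr => j _.
  rewrite mderivM raddfD /= !rmorphM /= mulrDl.
  by congr (_ + _); rewrite -!mulrA; congr (_ * _); rewrite mulrC //; rewrite mulrCA.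
Qed.

End Gen.

Section Map.
Variables (R S : comNzRingType) (f : {rmorphism R -> S}).

Lemma map_mderivm (a : nat) (m : 'X_{1..a}) (p : {mpoly R[a]}) :
  map_mpoly f (p^`M[m]) = (map_mpoly f p)^`M[m].
Proof.
apply/mpolyP => m'; rewrite mcoeff_map_mpoly !mcoeff_mderivm.
by rewrite mcoeff_map_mpoly raddfMn.
Qed.

Lemma map_mpoly_mPo (a b : nat) (p : {mpoly R[a]}) (lq : a.-tuple {mpoly R[b]}) :
  map_mpoly f (p \mPo lq) =
  (map_mpoly f p) \mPo [tuple map_mpoly f (tnth lq i) | i < a].
Proof.
elim/mpoly_ind2: p.
- by move=> c0; rewrite comp_mpolyC !map_mpolyC comp_mpolyC.
- by move=> i; rewrite comp_mpolyXU map_mpolyX comp_mpolyXU -!tnth_nth tnth_mktuple.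
- by move=> p q Hp Hq; rewrite !raddfD /= Hp Hq.
- by move=> p q Hp Hq; rewrite !rmorphM /= Hp Hq.
Qed.

Lemma map_Fpoly (N : nat) (A : 'M[R]_N) nin c c' :
  (forall i, f (c i) = c' i) ->
  map_mpoly f (Fpoly A nin c) = Fpoly (map_mx f A) nin c'.
Proof.
move=> Hc; rewrite /Fpoly rmorph_prod; apply: eq_bigr => i _.
rewrite /= map_mpolyZ rmorphXn raddf_sum Hc; congr (_ *: (_ ^+ _)).
by apply: eq_bigr => j _; rewrite /= map_mpolyZ map_mpolyX mxE.
Qed.

Lemma map_herald_subst (K M : nat) :
  [tuple map_mpoly f (tnth (herald_subst R K M) i) | i < K + M] = herald_subst S K M.
Proof.
apply: eq_from_tnth => i; rewrite !tnth_mktuple.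
by case: (split i) => [k|j]; rewrite ?map_mpolyX ?rmorph0.
Qed.

Lemma map_Gpoly (K M : nat) (A : 'M[R]_(K + M)) nin c c' mpat d :
  (forall i, f (c i) = c' i) ->
  map_mpoly f (Gpoly A nin c mpat d) = Gpoly (map_mx f A) nin c' mpat (f d).
Proof.
move=> Hc; rewrite /Gpoly map_mpolyZ map_mpoly_mPo map_mderivm (map_Fpoly _ _ Hc).
by rewrite map_herald_subst.
Qed.

End Map.

Section Core.
Variable R : comNzRingType.
Variables (K M K' m NT : nat) (mpat : 'I_M -> nat).
Hypothesis NTK : (NT <= K)%N.
Hypothesis NTK' : (NT <= K')%N.
Hypothesis summ : (\sum_(j < M) mpat j)%N = m.

Definition s_h : seq 'I_M := flatten [seq nseq (mpat j) j | j <- enum 'I_M].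
Definition shn : seq nat := map val s_h.

Lemma size_s_h : size s_h = m.
Proof.
rewrite /s_h size_flatten /shape -map_comp -summ sumnE big_map.
by rewrite big_enum /=; apply: eq_bigr => j _; rewrite /= size_nseq.
Qed.

Definition Smx : 'M[R]_(K + M, K' + m) := \matrix_(j, col)
  ((((j < NT)%N && (j == col :> nat)) ||
    [&& (K <= j)%N, (K' <= col)%N & (j - K == nth 0%N shn (col - K'))%N]) %:R).

Definition sigma : (K + M).-tuple {mpoly R[K' + m]} :=
  [tuple \sum_(col < K' + m) Smx j col *: 'X_col | j < K + M].

Lemma mderiv_sigma j y : (tnth sigma j)^`M(y) = (Smx j y)%:MP.
Proof.
rewrite tnth_mktuple raddf_sum /= (bigD1 y) //= big1.
  by rewrite mderivZ mderiv_Xi eqxx addr0 -alg_mpolyC.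
by move=> col /negbTE cy; rewrite mderivZ mderiv_Xi cy scaler0.
Qed.

Lemma mderiv_comp_sigma (P : {mpoly R[K + M]}) (y : 'I_m) (j0 : 'I_M) :
  nth 0%N shn y = j0 ->
  (P \mPo sigma)^`M(rshift K' y) = P^`M(rshift K j0) \mPo sigma.
Proof.
move=> Hy; rewrite mderiv_chain (bigD1 (rshift K j0)) //= big1.
  rewrite mderiv_sigma mxE /=. rewrite !addKn Hy eqxx !leq_addr /= orbT.
  by rewrite mpolyC1 mulr1 addr0.
move=> j Hj; rewrite mderiv_sigma mxE /= leq_addr /=.
case: (boolP (j < NT)%N) => jNT /=.
  have -> : (j == K' + y :> nat) = false.
    by apply/negbTE; rewrite neq_ltn (leq_trans jNT) // (leq_trans NTK') ?leq_addr.
  rewrite addKn; case: (boolP (K <= j)%N) => Kj /=; last by rewrite mpolyC0 mulr0.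
  by move: jNT; rewrite ltnNge (leq_trans NTK Kj).
rewrite addKn; case: (boolP (K <= j)%N) => Kj /=; last by rewrite mpolyC0 mulr0.
case: eqP => [E|]; last by rewrite mpolyC0 mulr0.
by move: Hj; rewrite -(inj_eq val_inj) /= -Hy -E subnKC // eqxx.
Qed.

Lemma iter_sigma (P : {mpoly R[K + M]}) (ys : seq 'I_m) (js : seq 'I_M) :
  map (fun y : 'I_m => nth 0%N shn y) ys = map val js ->
  foldr (fun y => mderiv (rshift K' y)) (P \mPo sigma) ys =
  (foldr (fun j => mderiv (rshift K j)) P js) \mPo sigma.
Proof.
elim: ys js => [|y ys IH] [|j js] //= [E1 E2].
by rewrite (IH js E2) (mderiv_comp_sigma _ E1).
Qed.

Lemma mderivm_sumU (a : nat) (T : Type) (r : seq T) (F : T -> 'I_a)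
   (p : {mpoly R[a]}) :
  p^`M[\big[+%MM/0%MM]_(x <- r) (U_(F x))%MM] = foldr (fun x => mderiv (F x)) p r.
Proof.
elim: r => [|x r IH]; first by rewrite big_nil mderivm0m.
by rewrite big_cons /= addmC mderivmDm IH mderivmU1m.
Qed.

Lemma herald_mnm_sh :
  herald_mnm K mpat = \big[+%MM/0%MM]_(j <- s_h) (U_(rshift K j))%MM.
Proof.
apply/mnmP => i; rewrite mnmE mnm_sumE /s_h big_flatten /= big_map.
rewrite big_enum /=.
under eq_bigr => j _ do rewrite big_nseq.
case: splitP => [k Ek|j0 Ej0].
  rewrite big1 // => j _; rewrite mnm1E.
  have -> : (rshift K j == i) = false.
    apply/negbTE/eqP => E; have := ltn_ord k; rewrite -Ek -E /=; lia.
  by move: (mpat j) => t; elim: t.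
rewrite (bigD1 j0) //= big1 ?addn0.
  rewrite mnm1E -(inj_eq val_inj) /= Ej0 eqxx.
  move: (mpat j0) => t; elim: t => //= t IH; by rewrite -{1}IH.
move=> j Hj; rewrite mnm1E -(inj_eq val_inj) /= Ej0 eqn_add2l.
rewrite (inj_eq val_inj) (negbTE Hj).
by move: (mpat j) => t; elim: t.
Qed.

Lemma herald_mnm_ones :
  herald_mnm K' (fun _ : 'I_m => 1%N) = \big[+%MM/0%MM]_(y <- enum 'I_m) (U_(rshift K' y))%MM.
Proof.
apply/mnmP => i; rewrite mnmE mnm_sumE big_enum /=.
case: splitP => [k Ek|j0 Ej0].
  rewrite big1 // => j _; rewrite mnm1E.
  have -> : (rshift K' j == i) = false by apply/negbTE/eqP => E; have := ltn_ord k; rewrite -Ek -E /=; lia.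
  by [].
rewrite (bigD1 j0) //= big1 ?addn0.
  by rewrite mnm1E -(inj_eq val_inj) /= Ej0 eqxx.
move=> j Hj; rewrite mnm1E -(inj_eq val_inj) /= Ej0 eqn_add2l.
by rewrite (inj_eq val_inj) (negbTE Hj).
Qed.

Lemma shn_enum : map (fun y : 'I_m => nth 0%N shn y) (enum 'I_m) = map val s_h.
Proof.
rewrite -[RHS](mkseq_nth 0%N) /mkseq size_map size_s_h -val_enum_ord -map_comp.
by [].
Qed.

Lemma herald_sigma (P : {mpoly R[K + M]}) :
  (P \mPo sigma)^`M[herald_mnm K' (fun _ : 'I_m => 1%N)] =
  P^`M[herald_mnm K mpat] \mPo sigma.
Proof.
rewrite herald_mnm_ones herald_mnm_sh !mderivm_sumU.
exact: iter_sigma shn_enum.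
Qed.

End Core.

Section Core2.
Variable R : comNzRingType.
Variables (K M K' m NT n : nat) (mpat : 'I_M -> nat) (nin : 'I_(K + M) -> nat).
Variables (A : 'M[R]_(K + M)) (c : 'I_(K + M) -> R).
Hypothesis sumn_in : (\sum_(i < K + M) nin i)%N = n.
Hypothesis nle : (n <= K' + m)%N.

Definition s_in : seq 'I_(K + M) := flatten [seq nseq (nin i) i | i <- enum 'I_(K + M)].

Lemma size_s_in : size s_in = n.
Proof.
rewrite /s_in size_flatten /shape -map_comp -sumn_in sumnE big_map.
by rewrite big_enum /=; apply: eq_bigr => j _; rewrite /= size_nseq.
Qed.

Definition linf (r : 'rV[R]_(K' + m)) : {mpoly R[K' + m]} :=
  \sum_(col < K' + m) r 0 col *: 'X_col.

Definition AS := A *m @Smx R K M K' m NT mpat.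

Definition Apmx : 'M[R]_(K' + m) :=
  \matrix_(p, col) (nth 0 [seq row i AS | i <- s_in] p) 0 col.

Definition nin' (p : 'I_(K' + m)) : nat := (p < n)%N.

Lemma prod_nseq (T : Type) (F : T -> {mpoly R[K' + m]}) k (a : T) :
  \prod_(x <- nseq k a) F x = F a ^+ k.
Proof. by elim: k => [|k IH]; rewrite ?big_nil ?expr0 // big_cons IH exprS. Qed.

Lemma F_sigma :
  Fpoly A nin c \mPo @sigma R K M K' m NT mpat =
  (\prod_(i < K + M) c i) *: Fpoly Apmx nin' (fun _ => 1).
Proof.
rewrite /Fpoly rmorph_prod /=.
under eq_bigr => i _ do rewrite comp_mpolyZ rmorphXn raddf_sum /=.
rewrite scaler_prod; congr (_ *: _).
have Hlin : forall i : 'I_(K + M),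
   \sum_(j < K + M) ((A i j *: 'X_j) \mPo @sigma R K M K' m NT mpat) = linf (row i AS).
  move=> i; rewrite /linf.
  under eq_bigr => j _ do rewrite comp_mpolyZ comp_mpolyXU -tnth_nth tnth_mktuple scaler_sumr.
  rewrite exchange_big /=; apply: eq_bigr => col _.
  rewrite !mxE scaler_suml; apply: eq_bigr => j _.
  by rewrite scalerA.
under eq_bigr => i _ do rewrite Hlin.
under [RHS]eq_bigr => p _ do rewrite scale1r.
have -> : \prod_(p < K' + m) (\sum_(j < K' + m) Apmx p j *: 'X_j) ^+ nin' p =
          \prod_(p < n) linf (nth 0 [seq row i AS | i <- s_in] p).
  rewrite [RHS](big_ord_widen (K' + m) (fun p : nat => linf (nth 0 [seq row i AS | i <- s_in] p)) nle) [RHS]big_mkcond /=.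
  apply: eq_bigr => p _.
  rewrite /nin'; case: (p < n)%N; rewrite ?expr0 // expr1 /linf.
  by apply: eq_bigr => j _; rewrite mxE.
transitivity (\prod_(x <- [seq row i AS | i <- s_in]) linf x).
  rewrite big_map /s_in big_flatten /= big_map big_enum /=.
  by apply: eq_bigr => i _; rewrite prod_nseq.
rewrite (big_nth 0) size_map size_s_in big_mkord.
by [].
Qed.

End Core2.

Lemma split_rshift a b (y : 'I_b) : split (rshift a y) = inr y.
Proof. exact: (unsplitK (inr y)). Qed.
Lemma split_lshift a b (y : 'I_a) : split (lshift b y) = inl y.
Proof. exact: (unsplitK (inl y)). Qed.

Section Core3.
Variable R : comNzRingType.
Variables (K M K' m NT : nat) (mpat : 'I_M -> nat).
Hypothesis NTK : (NT <= K)%N.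
Hypothesis NTK' : (NT <= K')%N.

Definition tau : K.-tuple {mpoly R[K']} :=
  [tuple \sum_(k' < K') (((k < NT)%N && (k == k' :> nat))%:R : R) *: 'X_k' | k < K].

Lemma tuple_eq :
  [tuple (tnth (herald_subst R K M) i \mPo tau) | i < K + M] =
  [tuple (tnth (@sigma R K M K' m NT mpat) i \mPo herald_subst R K' m) | i < K + M].
Proof.
apply: eq_from_tnth => i; rewrite !tnth_mktuple raddf_sum /=.
rewrite big_split_ord /= [X in _ = _ + X]big1; last first.
  by move=> y _; rewrite comp_mpolyZ comp_mpolyXU -tnth_nth tnth_mktuple split_rshift scaler0.
rewrite addr0; case: splitP => [k Ek|j Ej].
  rewrite comp_mpolyXU -tnth_nth tnth_mktuple; apply: eq_bigr => k' _.
  rewrite comp_mpolyZ comp_mpolyXU -tnth_nth tnth_mktuple split_lshift mxE /= Ek.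
  have -> : [&& (K <= k)%N, (K' <= k')%N & (k - K == nth 0%N (shn mpat) (k' - K'))%N] = false.
    by rewrite (leqNgt K' k') ltn_ord andbF.
  by rewrite orbF.
rewrite comp_mpoly0 big1 // => k' _.
rewrite comp_mpolyZ comp_mpolyXU -tnth_nth tnth_mktuple split_lshift mxE /= Ej.
have -> : (K + j < NT)%N = false.
  by apply/negbTE; rewrite -leqNgt (leq_trans NTK) ?leq_addr.
by rewrite /= (leqNgt K' k') ltn_ord andbF scale0r.
Qed.

Lemma embed_tau (Q : {mpoly R[NT]}) :
  embed_target K Q \mPo tau = embed_target K' Q.
Proof.
rewrite /embed_target comp_mpolyA; congr (Q \mPo _).
apply: eq_from_tnth => i; rewrite !tnth_mktuple.
have iK : (i < K)%N by rewrite (leq_trans (ltn_ord i)).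
have iK' : (i < K')%N by rewrite (leq_trans (ltn_ord i)).
rewrite (insubT (fun k => k < K)%N iK) (insubT (fun k => k < K')%N iK') /=.
rewrite comp_mpolyXU -tnth_nth tnth_mktuple /=.
rewrite (bigD1 (Ordinal iK')) //= ltn_ord eqxx scale1r big1 ?addr0 //.
move=> k' Hk' /=.
have -> : (i == k' :> nat) = false.
  by apply/negbTE; move: Hk'; apply: contra => /eqP E; apply/eqP/val_inj.
by rewrite scale0r.
Qed.

End Core3.

Lemma core (R : comNzRingType) (K M K' m NT n : nat) (mpat : 'I_M -> nat)
  (nin : 'I_(K + M) -> nat) (A : 'M[R]_(K + M)) (c : 'I_(K + M) -> R) (d : R) :
  (NT <= K)%N -> (NT <= K')%N -> (\sum_(j < M) mpat j)%N = m ->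
  (\sum_(i < K + M) nin i)%N = n -> (n <= K' + m)%N ->
  Gpoly A nin c mpat d \mPo tau R K K' NT =
  (d * \prod_(i < K + M) c i) *:
    Gpoly (@Apmx R K M K' m NT mpat nin A) (nin' n) (fun _ => 1)
          (fun _ : 'I_m => 1%N) 1.
Proof.
move=> NTK NTK' summ sumn nle.
rewrite /Gpoly comp_mpolyZ comp_mpolyA (tuple_eq _ K' m mpat NTK) -comp_mpolyA.
rewrite -(herald_sigma NTK NTK' summ) (F_sigma NT mpat A c sumn nle).
by rewrite mderivmZ comp_mpolyZ scale1r scalerA.
Qed.

Lemma Gpoly_ext (R : comNzRingType) K M (A : 'M[R]_(K + M)) nin c1 c2 mpat d :
  c1 =1 c2 -> Gpoly A nin c1 mpat d = Gpoly A nin c2 mpat d.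
Proof.
by move=> H; rewrite /Gpoly /Fpoly; under eq_bigr => i _ do rewrite H.
Qed.

Unset Implicit Arguments.
Set Strict Implicit.

Theorem theorem2 (R : realType) (n m NT : nat) (Q : {mpoly (complex R)[NT]}) :
  (m <= n)%N -> (1 <= NT)%N -> Q != 0 -> Q \is (n - m)%N.-homog ->
  has_Nullstellensatz_certificate (@opt_input n m NT) (@opt_pattern m) Q ->
  forall (K M : nat) (nin : 'I_(K + M) -> nat) (mpat : 'I_M -> nat),
    (\sum_(i < K + M) nin i)%N = n ->
    (\sum_(j < M) mpat j)%N = m ->
    (NT <= K)%N ->
    ~ generable nin mpat Q.
Proof.
move=> Hmn HNT HQ Hhom [s [beta Hcert]] K M nin mpat Hn Hm HNTK [A [gamma Hgen]].
set K' := optK n m NT.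
have NTK' : (NT <= K')%N by rewrite /K' /optK; lia.
have nle : (n <= K' + m)%N by rewrite /K' /optK; lia.
pose A' := @Apmx _ K M K' m NT mpat nin A.
pose kap := herald_const R mpat * \prod_(i < K + M) in_const R nin i.
have Hopt : (gamma * kap) *: Gheralded A' (@opt_input n m NT) (@opt_pattern m)
            = embed_target K' Q.
  have -> : Gheralded A' (@opt_input n m NT) (@opt_pattern m) =
            Gpoly A' (nin' n) (fun _ => 1) (fun _ : 'I_m => 1%N) 1.
    rewrite /Gheralded.
    have -> : herald_const R (@opt_pattern m) = 1.
      by rewrite /herald_const big1 ?invr1 // => j _.
    apply: Gpoly_ext => i; rewrite /in_const /opt_input.
    by case: (i < n)%N; rewrite /= sqrtC1 invr1.
  rewrite -(embed_tau HNTK NTK' Q) -Hgen comp_mpolyZ /Gheralded.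
  rewrite (core _ _ _ HNTK NTK' Hm Hn nle). by rewrite [RHS]scalerA.
pose v : 'I_((K' + m) * (K' + m)).+1 -> complex R := fun x =>
  match unlift ord0 x with None => gamma * kap | Some t => mxvec A' 0 t end.
have Hv0 : meval v (gamma_var R (K' + m)) = gamma * kap.
  by rewrite /gamma_var mevalXU /v unlift_none.
have HvA : map_mx (meval v) (A_var R (K' + m)) = A'.
  apply/matrixP => i j; rewrite !mxE mevalXU /v liftK /=. by rewrite mxvecE /A' mxE.
have HQm : map_mpoly (meval v)
    (map_mpoly (fun c0 : complex R => mpolyC ((K' + m) * (K' + m)).+1 c0) Q) = Q.
  by apply/mpolyP => mu; rewrite !mcoeff_map_mpoly /= mevalC.
have Hmap : map_mpoly (meval v)
   (system_poly (@opt_input n m NT) (@opt_pattern m) Q) =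
   (gamma * kap) *: Gheralded A' (@opt_input n m NT) (@opt_pattern m)
   - embed_target K' Q.
  rewrite /system_poly raddfB /= map_mpolyZ /= Hv0.
  rewrite (map_Gpoly _ _ _ _ (c' := in_const R (@opt_input n m NT))); last first.
    by move=> i /=; rewrite mevalC.
  rewrite /= HvA (mevalC v); congr (_ - _).
  rewrite /embed_target map_mpoly_mPo HQm; congr (Q \mPo _).
  apply: eq_from_tnth => i; rewrite !tnth_mktuple.
  by case: insub => [k|]; rewrite ?map_mpolyX ?rmorph0.
have := congr1 (meval v) Hcert.
rewrite meval1 raddf_sum /= big1 ?oner_eq0 //.
  by move=> /eqP; rewrite oner_eq0.
move=> mu _; rewrite mevalM -mcoeff_map_mpoly Hmap Hopt subrr mcoeff0.
by rewrite mulr0.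
Qed.
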